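(* Let $q\ge 2$ be a prime, and let $\Gamma=(V,E)$ be a complete digraph on $2q-1$ vertices with weights $w(e)\in\mathbb{Z}_q$ on its edges. Then $\Gamma$ contains a directed cycle $C$ whose total weight $\sum_{e\in C} w(e)$ is $0$ in $\mathbb{Z}_q$.
   Context: A complete digraph is a digraph in which every ordered pair $(u,v)$ of distinct vertices is joined by exactly one directed edge from $u$ to $v$ (so each pair of vertices is connected by one edge in each direction). Directed cycles may have length $2$. *)

(* Defs.v *)
From mathcomp Require Import all_boot all_algebra.
Set Implicit Arguments. Unset Strict Implicit. Unset Printing Implicit Defensive.
Import GRing.Theory.
Local Open Scope ring_scope.

(* The complete digraph on a finite vertex type V: every ordered pair (u,v)
   with u <> v is an edge.  An edge weighting with values in a ring R is a
   function w : V -> V -> R (the diagonal values w v v are never used, as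
   there are no loops).

   A directed cycle is given by a duplicate-free sequence c of at least 2
   vertices [v_0; ...; v_{k-1}], with edges v_i -> v_{i+1} and v_{k-1} -> v_0
   (so cycles of length 2 are allowed).  In the complete digraph every such
   sequence is a directed cycle. *)
Definition is_dcycle (V : finType) (c : seq V) : bool :=
  uniq c && (2 <= size c)%N.

Definition cycle_weight (V : finType) (R : nmodType) (w : V -> V -> R)
  (c : seq V) : R :=
  \sum_(x <- c) w x (next c x).

(* Main.v *)
Require Import Defs.
From mathcomp Require Import all_boot all_algebra zify.
Set Implicit Arguments. Unset Strict Implicit.
Import GRing.Theory.
Local Open Scope ring_scope.
Section S.
Variables (q : nat) (V : finType) (w : V -> V -> 'Z_q).

Fixpoint pw (x : V) (p : seq V) : 'Z_q :=
  match p with [::] => 0 | y :: p' => w x y + pw y p' end.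

Lemma pw_rcons x p y : pw x (rcons p y) = pw x p + w (last x p) y.
Proof. by elim: p x => [|z p IH] x /=; rewrite ?IH ?addr0 ?add0r ?addrA. Qed.

Lemma sum_next (n : V -> V) x p z :
  path (fun a b => n a == b) x (rcons p z) ->
  \sum_(y <- x :: p) w y (n y) = pw x (rcons p z).
Proof.
elim: p x => [|y p IH] x /=.
  by rewrite andbT big_cons big_nil => /eqP ->; rewrite !addr0.
by case/andP=> /eqP e /IH; rewrite big_cons e => ->.
Qed.

Lemma cw x p : uniq (x :: p) -> cycle_weight w (x :: p) = pw x (rcons p x).
Proof.
move=> U; rewrite /cycle_weight; apply: sum_next.
by have := cycle_next U.
Qed.
Hypothesis hq : prime q.
Lemma cardZ : #|'Z_q| = q.
Proof. by rewrite card_ord Zp_cast // prime_gt1. Qed.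

Lemma closed_full (A : {set 'Z_q}) (d : 'Z_q) :
  d != 0 -> (forall x, x \in A -> x + d \in A) -> forall x, x \in A -> A = setT.
Proof.
move=> d0 cl x xA; apply/setP => z; rewrite inE.
have q1 := prime_gt1 hq.
have ud : d \is a GRing.unit.
  rewrite -(natr_Zp d) unitZpE // prime_coprime //.
  apply/negP => /dvdn_leq; have : (0 < d)%N.
    by rewrite lt0n; apply: contra d0 => /eqP h; apply/eqP/val_inj.
  move=> dp /(_ dp); rewrite leqNgt.
  have : (d < q)%N by apply: leq_trans (ltn_ord d) _; rewrite Zp_cast.
  by move=> ->.
have H : forall n, x + d *+ n \in A.
  by elim=> [|n IH]; rewrite ?mulr0n ?addr0 // mulrS addrCA addrC cl.
set u := d^-1 * (z - x).
have -> : z = x + d *+ u by by rewrite -mulr_natr natr_Zp /u mulrA divrr // mul1r addrC subrK.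
exact: H.
Qed.

Lemma grow (A : {set 'Z_q}) (a b : 'Z_q) :
  a != b -> (0 < #|A|)%N -> (#|A| < q)%N ->
  (#|A| < #|[set (x + a)%R | x in A] :|: [set (x + b)%R | x in A]|)%N.
Proof.
move=> ab A0 Aq.
have ca : forall c, #|[set (x + c)%R | x in A]| = #|A|.
  by move=> c; apply: card_imset; apply: addIr.
rewrite ltnNge; apply/negP => hle.
have sub : [set (x + a)%R | x in A] \subset [set (x + a)%R | x in A] :|: [set (x + b)%R | x in A] by apply: subsetUl.
have E : [set (x + a)%R | x in A] = [set (x + a)%R | x in A] :|: [set (x + b)%R | x in A].
  by apply/eqP; rewrite eqEcard sub ca.
have cl : forall x, x \in A -> x + (b - a) \in A.
  move=> x xA.
  have : x + b \in [set (x + a)%R | x in A] by rewrite E inE; apply/orP; right; apply: imset_f.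
  case/imsetP => y yA e.
  suff -> : x + (b - a) = y by [].
  by rewrite addrA e addrK.
have [x xA] : exists x, x \in A by apply/set0Pn; rewrite -card_gt0.
have := closed_full _ cl xA.
rewrite subr_eq0 eq_sym ab => /(_ isT) eA.
by move: Aq; rewrite eA cardsT cardZ ltnn.
Qed.

Variable r : V.
Hypothesis H2 : forall a b, a != b -> w a b + w b a != 0.

Definition good (U : {set V}) (c : V) (A : {set 'Z_q}) :=
  forall t, t \in A -> exists p, [/\ uniq (r :: p), last r p = c,
     {subset p <= U} & pw r p = t].

Lemma extend (U : {set V}) c A e o : good U c A -> e != r -> o != r -> e != o ->
  e \notin U -> o \notin U ->
  good (e |: (o |: U)) e ([set (t + w c e)%R | t in A] :|: [set (t + (w c o + w o e))%R | t in A]).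
Proof.
move=> G er or eo eU oU t; rewrite inE => /orP [] /imsetP [t' /G [p [up lp sp wp]] ->].
  exists (rcons p e); split.
  - rewrite -rcons_cons rcons_uniq up andbT inE negb_or er /=.
    by apply: contra eU => /sp.
  - by rewrite last_rcons.
  - move=> x; rewrite mem_rcons inE => /orP [/eqP ->|/sp xU]; rewrite !inE ?eqxx ?xU ?orbT //.
  - by rewrite pw_rcons lp wp.
exists (rcons (rcons p o) e); split.
- rewrite -!rcons_cons !rcons_uniq up andbT mem_rcons !inE !negb_or er or /=.
  by rewrite eo; apply/andP; split; [apply: contra eU => /sp | apply: contra oU => /sp].
- by rewrite last_rcons.
- move=> x; rewrite mem_rcons inE mem_rcons inE => /or3P [/eqP ->|/eqP ->|/sp xU]; rewrite !inE ?eqxx ?xU ?orbT //.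
- by rewrite !pw_rcons last_rcons lp wp addrA.
Qed.

Lemma good_sub (U1 U2 : {set V}) c A : U1 \subset U2 -> good U1 c A -> good U2 c A.
Proof.
move=> s G t /G [p [u l sp wp]]; exists p; split=> // x /sp xU.
exact: (subsetP s).
Qed.

Lemma size_step k (A : {set 'Z_q}) al be : (k.+1 <= #|A|)%N -> (k.+1 < q)%N -> al != be ->
  (k.+2 <= #|[set (t + al)%R | t in A] :|: [set (t + be)%R | t in A]|)%N.
Proof.
move=> hA hk ab.
have ca : #|[set (t + al)%R | t in A]| = #|A| by apply: card_imset; apply: addIr.
have le : (#|A| <= #|[set (t + al)%R | t in A] :|: [set (t + be)%R | t in A]|)%N.
  by rewrite -{1}ca; apply: subset_leq_card; apply: subsetUl.
case: (ltnP k.+1 #|A|) => h; first by apply: leq_trans h le.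
have eA : #|A| = k.+1 by apply/eqP; rewrite eqn_leq h hA.
have := grow (A := A) ab; rewrite eA => /(_ isT hk); exact.
Qed.

Lemma main k : (k < q)%N -> forall U : {set V}, r \in U -> (2*k+1 <= #|U|)%N ->
  exists c (A : {set 'Z_q}), [/\ (k.+1 <= #|A|)%N, (0 < k)%N -> c != r & good U c A].
Proof.
elim: k => [|k IH] hk U rU hU.
  exists r, [set 0]; split; [by rewrite cards1 | by [] | ].
  move=> t; rewrite inE => /eqP ->; exists [::]; split => //.
have cr := cardsD1 r U; rewrite rU in cr.
have [a aU] : exists a, a \in U :\ r by apply/set0Pn; rewrite -card_gt0; lia.
have ca := cardsD1 a (U :\ r); rewrite aU in ca.
have [b bU] : exists b, b \in U :\ r :\ a by apply/set0Pn; rewrite -card_gt0; lia.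
move: aU bU; rewrite !inE => /andP [ar aU] /and3P [ba br bU].
set U' := U :\ a :\ b.
have rU' : r \in U' by rewrite !inE eq_sym br eq_sym ar rU.
have c1 := cardsD1 a U; rewrite aU in c1.
have c2 := cardsD1 b (U :\ a); rewrite !inE ba bU in c2.
have hU' : (2 * k + 1 <= #|U'|)%N by rewrite /U'; lia.
have [c [A [hA _ G]]] := IH (ltnW hk) U' rU' hU'.
have aU' : a \notin U' by rewrite !inE eqxx andbF.
have bU' : b \notin U' by rewrite !inE eqxx.
have sub : forall e o, e \in U -> o \in U -> e |: (o |: U') \subset U.
  move=> e o eU oU; apply/subsetP => x; rewrite !inE => /or3P [/eqP ->|/eqP ->|/and3P [_ _ //]] //.
case: (eqVneq (w c b) (w c a + w a b)) => Eb; last first.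
  exists b, ([set (t + w c b)%R | t in A] :|: [set (t + (w c a + w a b))%R | t in A]).
  split; [exact: size_step | by [] | ].
  apply: good_sub (sub _ _ bU aU) _; apply: extend => //.
case: (eqVneq (w c a) (w c b + w b a)) => Ea; last first.
  exists a, ([set (t + w c a)%R | t in A] :|: [set (t + (w c b + w b a))%R | t in A]).
  split; [exact: size_step | by [] | ].
  apply: good_sub (sub _ _ aU bU) _; apply: extend => //; by rewrite eq_sym.
exfalso.
have ab : a != b by rewrite eq_sym.
move/negP: (H2 ab); apply; apply/eqP.
move: Eb; rewrite Ea -addrA -{1}[w c b]addr0 => /addrI ->.
by rewrite addrC.
Qed.
End S.

Unset Implicit Arguments.
Theorem lemma5 (q : nat) (hq : prime q) (V : finType)
  (hV : #|V| = (2 * q - 1)%N) (w : V -> V -> 'Z_q) :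
  exists c : seq V, is_dcycle c /\ cycle_weight w c = 0.
Proof.
have q1 := prime_gt1 hq.
case: (boolP [exists a, exists b, (a != b) && (w a b + w b a == 0)]).
  case/existsP => a /existsP [b /andP [ab /eqP e]].
  exists [:: a; b]; split.
    by rewrite /is_dcycle /= inE ab.
  by rewrite cw /= ?inE ?ab // addr0.
move=> nE.
have H2 : forall a b, a != b -> w a b + w b a != 0.
  move=> a b ab; apply/negP => /eqP e; move/negP: nE; apply.
  by apply/existsP; exists a; apply/existsP; exists b; rewrite ab e eqxx.
have [r _] : exists r : V, r \in [set: V] by apply/set0Pn; rewrite -card_gt0 cardsT; lia.
have hk : (q.-1 < q)%N by lia.
have hU : (2 * q.-1 + 1 <= #|[set: V]|)%N by rewrite cardsT; lia.
have [c [A [hA hc G]]] := main hq H2 hk (in_setT r) hU.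
have eA : A = setT by apply/eqP; rewrite eqEcard subsetT cardsT cardZ //; lia.
have [p [up lp _ wp]] : exists p, [/\ uniq (r :: p), last r p = c, {subset p <= [set: V]} & pw w r p = - w c r] by apply: G; rewrite eA inE.
have cr : c != r by apply: hc; lia.
exists (r :: p); split.
  rewrite /is_dcycle up /=; case: p lp {up wp} => // lp; move: cr; by rewrite -lp /= eqxx.
by rewrite cw // pw_rcons lp wp addNr.
Qed.
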